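(* For every $\varepsilon>0$ and $M>0$ there exists $\delta>0$ such that the following holds. Let $u\in U$ and let $(u_n)_{n\ge1}$ be a sequence in $U$ such that $\{u\}\cup\{u_n:n\ge1\}$ is bounded, all first super-diagonal entries $u_{i,i+1}$ and $(u_n)_{i,i+1}$ have absolute value at most $M$, and $|(u_n)_{i,i+1}-u_{i,i+1}|\le\delta$ for all $n$ and $i$. Then for all $i,j$, $\limsup_{n\to\infty}\left|\theta_{1/n}(u_1u_2\cdots u_n)_{i,j}-\theta_{1/n}(u^n)_{i,j}\right|<\varepsilon$.
   Context: $U$ is the group of $d\times d$ upper triangular real matrices with diagonal entries $1$; for $t>0$, $(\theta_t(u))_{i,j}=t^{j-i}u_{i,j}$ for $j\ge i$. *)

(* Defs.v *)
(* classical reals. d x d real matrices are represented as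
   functions nat -> nat -> R, only the entries with indices < d being relevant. *)
From Stdlib Require Import Reals Lra Lia Arith.
Open Scope R_scope.

Definition mat := nat -> nat -> R.

Fixpoint rsum (n : nat) (f : nat -> R) : R :=
  match n with
  | O => 0
  | S m => rsum m f + f m
  end.

Definition mmul (d : nat) (A B : mat) : mat :=
  fun i j => rsum d (fun k => A i k * B k j).

Definition mid : mat := fun i j => if Nat.eqb i j then 1 else 0.

Fixpoint mpow (d : nat) (A : mat) (n : nat) : mat :=
  match n with
  | O => mid
  | S m => mmul d (mpow d A m) A
  end.

(* u_1 u_2 ... u_n  (the sequence u is indexed from 1; u 0 is unused) *)
Fixpoint mprodseq (d : nat) (u : nat -> mat) (n : nat) : mat :=
  match n with
  | O => mid
  | S m => mmul d (mprodseq d u m) (u (S m))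
  end.

Definition in_U (d : nat) (A : mat) : Prop :=
  forall i j, (i < d)%nat -> (j < d)%nat ->
    (A i i = 1) /\ ((j < i)%nat -> A i j = 0).

(* dilation theta_t: (theta_t u)_{i,j} = t^(j-i) u_{i,j} for j >= i
   (entries below the diagonal are left unchanged; they are 0 on U) *)
Definition theta (t : R) (A : mat) : mat :=
  fun i j => if Nat.leb i j then t ^ (j - i) * A i j else A i j.

Definition limsup_lt (a : nat -> R) (e : R) : Prop :=
  exists e', e' < e /\ exists N : nat, forall n : nat, (N <= n)%nat -> a n <= e'.

(* Main.v *)
Require Import Defs.
From Stdlib Require Import Reals Lra Lia Arith.
Open Scope R_scope.

Lemma rsum_ext n f g : (forall k, (k < n)%nat -> f k = g k) -> rsum n f = rsum n g.
Proof. induction n; intros H; simpl; auto. rewrite IHn by (intros; apply H; lia). rewrite H by lia. reflexivity. Qed.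

Lemma rsum_minus n f g : rsum n f - rsum n g = rsum n (fun k => f k - g k).
Proof. induction n; simpl; [ring|]. rewrite <- IHn. ring. Qed.

Lemma rsum_zero n f : (forall k, (k < n)%nat -> f k = 0) -> rsum n f = 0.
Proof. induction n; intros H; simpl; auto. rewrite IHn by (intros; apply H; lia). rewrite H by lia. ring. Qed.

Lemma rsum_single n f m : (m < n)%nat -> (forall k, (k < n)%nat -> k <> m -> f k = 0) -> rsum n f = f m.
Proof.
  induction n; intros Hm H; simpl; [lia|].
  destruct (Nat.eq_dec m n).
  - subst. rewrite rsum_zero. ring. intros; apply H; lia.
  - rewrite IHn by (auto; lia || (intros; apply H; lia)). rewrite (H n) by lia. ring.
Qed.

Lemma rsum_bound n f c a b m1 m2 : 0 <= a -> 0 <= b ->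
  (forall k, (k < n)%nat -> Rabs (f k) <= c + (if Nat.eqb k m1 then a else 0) + (if Nat.eqb k m2 then b else 0)) ->
  Rabs (rsum n f) <= INR n * c + a + b.
Proof.
  intros Ha Hb. revert f.
  assert (G: forall f, (forall k, (k < n)%nat -> Rabs (f k) <= c + (if Nat.eqb k m1 then a else 0) + (if Nat.eqb k m2 then b else 0)) ->
    Rabs (rsum n f) <= INR n * c + (if Nat.ltb m1 n then a else 0) + (if Nat.ltb m2 n then b else 0)).
  { induction n; intros f H.
    - simpl. rewrite Rabs_R0. lra.
    - change (rsum (S n) f) with (rsum n f + f n). eapply Rle_trans. apply Rabs_triang.
      pose proof (IHn f (fun k Hk => H k ltac:(lia))) as IH.
      pose proof (H n ltac:(lia)) as Hn.
      replace (INR (S n) * c) with (INR n * c + c) by (rewrite S_INR; ring).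
      set (T := INR n * c) in *.
      destruct (Nat.ltb_spec m1 n); destruct (Nat.ltb_spec m1 (S n));
      destruct (Nat.ltb_spec m2 n); destruct (Nat.ltb_spec m2 (S n));
      destruct (Nat.eqb_spec n m1); destruct (Nat.eqb_spec n m2); try lia; lra. }
  intros f H. pose proof (G f H).
  destruct (Nat.ltb m1 n); destruct (Nat.ltb m2 n); lra.
Qed.

Lemma in_U_mid d : in_U d mid.
Proof. intros i j Hi Hj. unfold mid. rewrite Nat.eqb_refl. split; auto.
  intros. destruct (Nat.eqb_spec i j); [lia|auto]. Qed.

Lemma in_U_mul d A B : in_U d A -> in_U d B -> in_U d (mmul d A B).
Proof.
  intros HA HB i j Hi Hj. unfold mmul. split.
  - rewrite (rsum_single d _ i Hi).
    + rewrite (proj1 (HA i i Hi Hi)), (proj1 (HB i i Hi Hi)). ring.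
    + intros k Hk Hne. destruct (Nat.lt_ge_cases k i).
      * rewrite (proj2 (HA i k Hi Hk)) by auto. ring.
      * rewrite (proj2 (HB k i Hk Hi)) by lia. ring.
  - intros Hji. apply rsum_zero. intros k Hk. destruct (Nat.lt_ge_cases k i).
      * rewrite (proj2 (HA i k Hi Hk)) by auto. ring.
      * rewrite (proj2 (HB k j Hk Hj)) by lia. ring.
Qed.

Lemma prod_in_U d vs : (forall n, (1 <= n)%nat -> in_U d (vs n)) -> forall n, in_U d (mprodseq d vs n).
Proof. intros H n; induction n; simpl. apply in_U_mid. apply in_U_mul; auto. apply H; lia. Qed.

Lemma mpow_seq d u n : mpow d u n = mprodseq d (fun _ => u) n.
Proof. induction n; simpl; auto. rewrite IHn. reflexivity. Qed.

Lemma pow_succ_bound x g : 0 <= x -> x^(S g) + x^g <= (x+1)^(S g).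
Proof. intros Hx. simpl. assert (x^g <= (x+1)^g) by (apply pow_incr; lra).
  assert (0 <= x^g) by (apply pow_le; lra). nra. Qed.

Lemma other_bound A x h g : 1 <= A -> 1 <= x -> (h + 1 <= g)%nat ->
  A^h * x^h <= A^(S g) * x^g / x.
Proof.
  intros HA Hx Hh.
  assert (A^h <= A^(S g)) by (apply Rle_pow; auto; lia).
  assert (x^(S h) <= x^g) by (apply Rle_pow; auto; lia).
  assert (0 <= A^h) by (apply pow_le; lra).
  assert (0 <= x^h) by (apply pow_le; lra).
  simpl in H0.
  assert (x^h <= x^g / x).
  { apply (Rmult_le_reg_r x); [lra|]. unfold Rdiv. rewrite Rmult_assoc, Rinv_l by lra. lra. }
  unfold Rdiv in *. rewrite Rmult_assoc. apply Rmult_le_compat; auto.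
Qed.

Lemma Pbound (d:nat) (M B L : R) (vs : nat -> mat) :
 0 <= M -> 0 <= B -> 1 <= L -> INR d * B * (M+2) <= L ->
 (forall n, (1<=n)%nat -> in_U d (vs n)) ->
 (forall n k j, (1<=n)%nat -> (k<d)%nat -> (j<d)%nat -> Rabs (vs n k j) <= B) ->
 (forall n j, (1<=n)%nat -> (S j < d)%nat -> Rabs (vs n j (S j)) <= M) ->
 forall n i j, (i<d)%nat -> (j<d)%nat -> (i<=j)%nat ->
  Rabs (mprodseq d vs n i j) <= (M+2)^(j-i) * (INR n + L)^(j-i).
Proof.
  intros HM HB HL HdL HU HvB HvM n.
  pose proof (prod_in_U d vs HU) as PU.
  set (A := M + 2).
  assert (HA : 1 <= A) by (unfold A; lra).
  induction n as [|n IH]; intros i j Hi Hj Hij.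
  - simpl. unfold mid. destruct (Nat.eqb_spec i j).
    + subst. rewrite Nat.sub_diag. simpl. rewrite Rabs_R1. lra.
    + rewrite Rabs_R0. apply Rmult_le_pos; apply pow_le; simpl; lra.
  - destruct (Nat.eq_dec i j) as [<-|Hne].
    + rewrite Nat.sub_diag, (proj1 (PU (S n) i i Hi Hi)). simpl. rewrite Rabs_R1. lra.
    + destruct j as [|j']; [lia|].
      set (g' := (j' - i)%nat).
      assert (Hg : (S j' - i)%nat = S g') by (unfold g'; lia). rewrite Hg.
      set (x := INR n + L).
      assert (Hx : 1 <= x) by (unfold x; pose proof (pos_INR n); lra).
      replace (INR (S n) + L) with (x + 1) by (unfold x; rewrite S_INR; ring).
      change (mprodseq d vs (S n) i (S j')) with
        (rsum d (fun k => mprodseq d vs n i k * vs (S n) k (S j'))).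
      pose proof (HU (S n) ltac:(lia)) as VU.
      assert (HP : 0 <= A^g') by (apply pow_le; lra).
      assert (HX : 0 <= x^g') by (apply pow_le; lra).
      set (c := B * A^(S g') * x^g' / x).
      assert (Hc : 0 <= c).
      { unfold c. apply Rmult_le_pos. apply Rmult_le_pos. apply Rmult_le_pos; auto. apply pow_le; lra. auto.
        apply Rlt_le, Rinv_0_lt_compat; lra. }
      eapply Rle_trans.
      apply (rsum_bound d _ c (A^(S g') * x^(S g')) (A^g' * x^g' * M) (S j') j').
      { apply Rmult_le_pos; apply pow_le; lra. }
      { apply Rmult_le_pos; auto. apply Rmult_le_pos; auto. }
      * intros k Hk.
        destruct (Nat.eq_dec k (S j')) as [->|Hk1].
        { rewrite Nat.eqb_refl. replace (S j' =? j')%nat with false by (symmetry; apply Nat.eqb_neq; lia).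
          rewrite (proj1 (VU (S j') (S j') Hj Hj)), Rmult_1_r.
          pose proof (IH i (S j') Hi Hj Hij) as IH1. rewrite Hg in IH1. fold x in IH1. fold A in IH1. lra. }
        replace (k =? S j')%nat with false by (symmetry; apply Nat.eqb_neq; lia).
        destruct (Nat.eq_dec k j') as [->|Hk2].
        { rewrite Nat.eqb_refl. rewrite Rabs_mult.
          pose proof (IH i j' Hi ltac:(lia) ltac:(lia)) as IH1. fold x A g' in IH1.
          pose proof (HvM (S n) j' ltac:(lia) Hj).
          assert (0 <= Rabs (mprodseq d vs n i j')) by apply Rabs_pos.
          assert (0 <= Rabs (vs (S n) j' (S j'))) by apply Rabs_pos.
          assert (Rabs (mprodseq d vs n i j') * Rabs (vs (S n) j' (S j')) <= A ^ g' * x ^ g' * M)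
            by (apply Rmult_le_compat; auto). lra. }
        replace (k =? j')%nat with false by (symmetry; apply Nat.eqb_neq; lia).
        destruct (Nat.lt_ge_cases k i).
        { rewrite (proj2 (PU n i k Hi Hk)) by auto. rewrite Rmult_0_l, Rabs_R0. lra. }
        destruct (Nat.lt_ge_cases (S j') k).
        { rewrite (proj2 (VU k (S j') Hk Hj)) by auto. rewrite Rmult_0_r, Rabs_R0. lra. }
        rewrite Rabs_mult.
        pose proof (IH i k Hi Hk ltac:(lia)) as IH1. fold x A in IH1.
        pose proof (HvB (S n) k (S j') ltac:(lia) Hk Hj).
        pose proof (other_bound A x (k - i) g' HA Hx ltac:(unfold g'; lia)).
        assert (0 <= Rabs (mprodseq d vs n i k)) by apply Rabs_pos.
        assert (0 <= Rabs (vs (S n) k (S j'))) by apply Rabs_pos.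
        assert (Rabs (mprodseq d vs n i k) * Rabs (vs (S n) k (S j')) <= (A^(k-i) * x^(k-i)) * B)
            by (apply Rmult_le_compat; auto).
        assert ((A^(k-i) * x^(k-i)) * B <= A ^ S g' * x ^ g' / x * B) by (apply Rmult_le_compat_r; auto).
        unfold c. unfold Rdiv in *. lra.
      * assert (H1 : INR d * c <= A^g' * x^g').
        { replace (INR d * c) with ((INR d * B * A) * (A^g' * x^g') * / x) by (unfold c; simpl; field; lra).
          apply Rle_trans with (x * (A^g' * x^g') / x).
          - unfold Rdiv. apply Rmult_le_compat_r. apply Rlt_le, Rinv_0_lt_compat; lra.
            apply Rmult_le_compat_r. nra. unfold x. pose proof (pos_INR n). unfold A. lra.
          - right. field. lra. }
        pose proof (pow_succ_bound x g' ltac:(lra)).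
        assert (A^(S g') * (x^(S g') + x^g') <= A^(S g') * (x+1)^(S g')).
        { apply Rmult_le_compat_l; auto. apply pow_le; lra. }
        simpl pow in *. unfold A in *. nra.
Qed.

Lemma Dbound (d:nat) (M B L delta : R) (vs : nat -> mat) (u : mat) :
 0 <= M -> 0 <= B -> 1 <= L -> 0 < delta -> INR d * B * (M+2) <= L ->
 INR d * (delta + 2) * B * (2*M+3) <= delta * L ->
 (forall n, (1<=n)%nat -> in_U d (vs n)) ->
 (forall n k j, (1<=n)%nat -> (k<d)%nat -> (j<d)%nat -> Rabs (vs n k j) <= B) ->
 (forall n j, (1<=n)%nat -> (S j < d)%nat -> Rabs (vs n j (S j)) <= M) ->
 in_U d u ->
 (forall k j, (k<d)%nat -> (j<d)%nat -> Rabs (u k j) <= B) ->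
 (forall j, (S j < d)%nat -> Rabs (u j (S j)) <= M) ->
 (forall n j, (1<=n)%nat -> (S j < d)%nat -> Rabs (vs n j (S j) - u j (S j)) <= delta) ->
 forall n i j, (i<d)%nat -> (j<d)%nat -> (i<=j)%nat ->
  Rabs (mprodseq d vs n i j - mprodseq d (fun _ => u) n i j)
    <= delta * ((2*M+3)^(j-i) * (INR n + L)^(j-i)).
Proof.
  intros HM HB HL Hdel HdL HdL2 HU HvB HvM Hu HuB HuM Hvu n.
  pose proof (prod_in_U d vs HU) as PU.
  pose proof (prod_in_U d (fun _ => u) (fun _ _ => Hu)) as QU.
  pose proof (Pbound d M B L (fun _ => u) HM HB HL HdL (fun _ _ => Hu)
    (fun _ k j _ Hk Hj => HuB k j Hk Hj) (fun _ j _ Hj => HuM j Hj)) as QB.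
  set (A := M + 2). fold A in QB.
  set (C := 2*M + 3).
  assert (HA : 1 <= A) by (unfold A; lra).
  assert (HAC : A <= C) by (unfold A, C; lra).
  induction n as [|n IH]; intros i j Hi Hj Hij.
  - simpl. unfold mid. rewrite Rminus_diag, Rabs_R0.
    apply Rmult_le_pos; [lra|]. apply Rmult_le_pos; apply pow_le; simpl; unfold C; lra.
  - destruct (Nat.eq_dec i j) as [<-|Hne].
    + rewrite Nat.sub_diag, (proj1 (PU (S n) i i Hi Hi)), (proj1 (QU (S n) i i Hi Hi)).
      simpl. rewrite Rminus_diag, Rabs_R0. lra.
    + destruct j as [|j']; [lia|].
      set (g' := (j' - i)%nat).
      assert (Hg : (S j' - i)%nat = S g') by (unfold g'; lia). rewrite Hg.
      set (x := INR n + L).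
      assert (Hx : 1 <= x) by (unfold x; pose proof (pos_INR n); lra).
      replace (INR (S n) + L) with (x + 1) by (unfold x; rewrite S_INR; ring).
      change (mprodseq d vs (S n) i (S j')) with
        (rsum d (fun k => mprodseq d vs n i k * vs (S n) k (S j'))).
      change (mprodseq d (fun _ => u) (S n) i (S j')) with
        (rsum d (fun k => mprodseq d (fun _ => u) n i k * u k (S j'))).
      rewrite rsum_minus.
      set (P := mprodseq d vs n). set (Q := mprodseq d (fun _ => u) n).
      set (v := vs (S n)).
      rewrite (rsum_ext d _ (fun k => (P i k - Q i k) * v k (S j') + Q i k * (v k (S j') - u k (S j'))))
        by (intros; ring).
      pose proof (HU (S n) ltac:(lia)) as VU. fold v in VU.
      assert (HP : 0 <= C^g') by (apply pow_le; lra).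
      assert (HPA : 0 <= A^g') by (apply pow_le; lra).
      assert (HAPC : A^g' <= C^g') by (apply pow_incr; lra).
      assert (HX : 0 <= x^g') by (apply pow_le; lra).
      set (c := (delta + 2) * B * (C^(S g') * x^g' / x)).
      assert (Hc0 : 0 <= C^(S g') * x^g' / x).
      { apply Rmult_le_pos. apply Rmult_le_pos; auto. apply pow_le; lra.
        apply Rlt_le, Rinv_0_lt_compat; lra. }
      assert (Hc : 0 <= c) by (unfold c; apply Rmult_le_pos; auto; nra).
      eapply Rle_trans.
      apply (rsum_bound d _ c (delta * (C^(S g') * x^(S g'))) (delta * C^g' * x^g' * M + A^g' * x^g' * delta) (S j') j').
      { apply Rmult_le_pos; [lra|]. apply Rmult_le_pos; apply pow_le; lra. }
      { apply Rplus_le_le_0_compat; apply Rmult_le_pos; try lra; apply Rmult_le_pos; try lra; nra. }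
      * intros k Hk.
        destruct (Nat.eq_dec k (S j')) as [->|Hk1].
        { rewrite Nat.eqb_refl. replace (S j' =? j')%nat with false by (symmetry; apply Nat.eqb_neq; lia).
          rewrite (proj1 (VU (S j') (S j') Hj Hj)), (proj1 (Hu (S j') (S j') Hj Hj)).
          replace ((P i (S j') - Q i (S j')) * 1 + Q i (S j') * (1 - 1)) with (P i (S j') - Q i (S j')) by ring.
          pose proof (IH i (S j') Hi Hj Hij) as IH1. rewrite Hg in IH1. fold x C P Q in IH1. lra. }
        replace (k =? S j')%nat with false by (symmetry; apply Nat.eqb_neq; lia).
        destruct (Nat.eq_dec k j') as [->|Hk2].
        { rewrite Nat.eqb_refl.
          eapply Rle_trans. apply Rabs_triang. rewrite !Rabs_mult.
          pose proof (IH i j' Hi ltac:(lia) ltac:(lia)) as IH1. fold x C g' P Q in IH1.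
          pose proof (QB n i j' Hi ltac:(lia) ltac:(lia)) as IH2. fold x g' Q in IH2.
          pose proof (HvM (S n) j' ltac:(lia) Hj). fold v in H.
          pose proof (Hvu (S n) j' ltac:(lia) Hj). fold v in H0.
          pose proof (Rabs_pos (P i j' - Q i j')). pose proof (Rabs_pos (Q i j')).
          pose proof (Rabs_pos (v j' (S j'))). pose proof (Rabs_pos (v j' (S j') - u j' (S j'))).
          assert (Rabs (P i j' - Q i j') * Rabs (v j' (S j')) <= delta * (C ^ g' * x ^ g') * M)
            by (apply Rmult_le_compat; auto).
          assert (Rabs (Q i j') * Rabs (v j' (S j') - u j' (S j')) <= A ^ g' * x ^ g' * delta)
            by (apply Rmult_le_compat; auto).
          lra. }
        replace (k =? j')%nat with false by (symmetry; apply Nat.eqb_neq; lia).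
        destruct (Nat.lt_ge_cases k i).
        { unfold P, Q. rewrite (proj2 (PU n i k Hi Hk)), (proj2 (QU n i k Hi Hk)) by auto.
          replace ((0 - 0) * v k (S j') + 0 * (v k (S j') - u k (S j'))) with 0 by ring.
          rewrite Rabs_R0. lra. }
        destruct (Nat.lt_ge_cases (S j') k).
        { rewrite (proj2 (VU k (S j') Hk Hj)), (proj2 (Hu k (S j') Hk Hj)) by auto.
          replace ((P i k - Q i k) * 0 + Q i k * (0 - 0)) with 0 by ring.
          rewrite Rabs_R0. lra. }
        eapply Rle_trans. apply Rabs_triang. rewrite !Rabs_mult.
        pose proof (IH i k Hi Hk ltac:(lia)) as IH1. fold x C P Q in IH1.
        pose proof (QB n i k Hi Hk ltac:(lia)) as IH2. fold x Q in IH2.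
        pose proof (HvB (S n) k (S j') ltac:(lia) Hk Hj). fold v in H1.
        pose proof (HuB k (S j') Hk Hj).
        assert (Rabs (v k (S j') - u k (S j')) <= 2 * B).
        { unfold Rminus. eapply Rle_trans. apply Rabs_triang. rewrite Rabs_Ropp. lra. }
        pose proof (other_bound C x (k - i) g' ltac:(lra) Hx ltac:(unfold g'; lia)).
        assert (A^(k-i) <= C^(k-i)) by (apply pow_incr; lra).
        assert (0 <= x^(k-i)) by (apply pow_le; lra).
        assert (0 <= A^(k-i)) by (apply pow_le; lra).
        pose proof (Rabs_pos (P i k - Q i k)). pose proof (Rabs_pos (Q i k)).
        pose proof (Rabs_pos (v k (S j'))). pose proof (Rabs_pos (v k (S j') - u k (S j'))).
        assert (Rabs (P i k - Q i k) * Rabs (v k (S j')) <= delta * (C ^ (k-i) * x ^ (k-i)) * B)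
          by (apply Rmult_le_compat; auto).
        assert (Rabs (Q i k) * Rabs (v k (S j') - u k (S j')) <= (C ^ (k-i) * x ^ (k-i)) * (2*B)).
        { apply Rmult_le_compat; auto. eapply Rle_trans; [apply IH2|]. apply Rmult_le_compat_r; auto. }
        assert ((C ^ (k-i) * x ^ (k-i)) * ((delta + 2) * B) <= (C ^ S g' * x ^ g' / x) * ((delta+2) * B)).
        { apply Rmult_le_compat_r; auto. nra. }
        unfold c. nra.
      * assert (H1 : INR d * c <= delta * (C^g' * x^g')).
        { replace (INR d * c) with ((INR d * (delta + 2) * B * C) * (C^g' * x^g') * / x) by (unfold c; simpl; field; lra).
          apply Rle_trans with (delta * x * (C^g' * x^g') / x).
          - unfold Rdiv. apply Rmult_le_compat_r. apply Rlt_le, Rinv_0_lt_compat; lra.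
            apply Rmult_le_compat_r. nra. unfold x. pose proof (pos_INR n). fold C in HdL2. nra.
          - right. field. lra. }
        pose proof (pow_succ_bound x g' ltac:(lra)).
        assert (C^(S g') * (x^(S g') + x^g') <= C^(S g') * (x+1)^(S g')).
        { apply Rmult_le_compat_l; auto. apply pow_le; lra. }
        assert (A^g' * x^g' <= C^g' * x^g') by (apply Rmult_le_compat_r; auto).
        assert (delta * (A^g' * x^g') <= delta * (C^g' * x^g')) by (apply Rmult_le_compat_l; lra).
        assert (HH5: delta * (C^(S g') * (x^(S g') + x^g')) <= delta * (C^(S g') * (x+1)^(S g'))) by (apply Rmult_le_compat_l; lra).
        set (Y := C^g' * x^g') in *.
        assert (HY : 0 <= Y) by (unfold Y; nra).
        assert (E : C^(S g') * (x^(S g') + x^g') = C * Y * x + C * Y) by (unfold Y; simpl; ring).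
        rewrite E in HH5.
        assert (E2 : C^(S g') * x^(S g') = C * Y * x) by (unfold Y; simpl; ring).
        rewrite E2.
        assert (E3 : delta * C ^ g' * x ^ g' * M = delta * Y * M) by (unfold Y; ring).
        rewrite E3.
        assert (delta * Y * M + delta * Y + delta * Y <= delta * C * Y).
        { replace (delta*C*Y) with (delta*Y*M + delta*Y + delta*Y + delta*Y*(M+1)) by (unfold C; ring).
          assert (0 <= delta*Y*(M+1)) by (apply Rmult_le_pos; [apply Rmult_le_pos|]; lra). lra. }
        nra.
Qed.

Theorem mainTheorem15 (d : nat) :
  forall eps Mb : R, 0 < eps -> 0 < Mb ->
  exists delta : R, 0 < delta /\
  forall (u : mat) (us : nat -> mat),
    in_U d u ->
    (forall n, (1 <= n)%nat -> in_U d (us n)) ->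
    (exists B : R, forall i j, (i < d)%nat -> (j < d)%nat ->
        Rabs (u i j) <= B /\
        forall n, (1 <= n)%nat -> Rabs (us n i j) <= B) ->
    (forall i, (S i < d)%nat ->
        Rabs (u i (S i)) <= Mb /\
        forall n, (1 <= n)%nat ->
          Rabs (us n i (S i)) <= Mb /\
          Rabs (us n i (S i) - u i (S i)) <= delta) ->
    forall i j, (i < d)%nat -> (j < d)%nat ->
      limsup_lt
        (fun n => Rabs (theta (/ INR n) (mprodseq d us n) i j
                        - theta (/ INR n) (mpow d u n) i j))
        eps.
Proof.
  intros eps M Heps HM.
  set (C := 2*M+3).
  assert (HC1 : 1 <= 2*C) by (unfold C; lra).
  assert (HCd : 0 < (2*C)^d) by (apply pow_lt; lra).
  exists (eps / (2 * (2*C)^d)). split.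
  { apply Rdiv_lt_0_compat; lra. }
  set (delta := eps / (2 * (2*C)^d)).
  assert (Hdel : 0 < delta) by (apply Rdiv_lt_0_compat; lra).
  intros u us Hu HU [B0 HB0] HMb i j Hi Hj.
  set (B := Rabs B0).
  assert (HB : 0 <= B) by apply Rabs_pos.
  assert (HvB : forall n k j, (1<=n)%nat -> (k<d)%nat -> (j<d)%nat -> Rabs (us n k j) <= B).
  { intros n k l Hn Hk Hl. pose proof (proj2 (HB0 k l Hk Hl) n Hn). pose proof (Rle_abs B0). unfold B; lra. }
  assert (HuB : forall k j, (k<d)%nat -> (j<d)%nat -> Rabs (u k j) <= B).
  { intros k l Hk Hl. pose proof (proj1 (HB0 k l Hk Hl)). pose proof (Rle_abs B0). unfold B; lra. }
  set (L := 1 + INR d * B * (M+2) + INR d * (delta + 2) * B * C / delta).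
  assert (Hp1 : 0 <= INR d * B * (M+2)).
  { pose proof (pos_INR d). apply Rmult_le_pos; [apply Rmult_le_pos|]; lra. }
  assert (Hp2 : 0 <= INR d * (delta + 2) * B * C / delta).
  { pose proof (pos_INR d). unfold Rdiv. apply Rmult_le_pos; [|apply Rlt_le, Rinv_0_lt_compat; lra].
    apply Rmult_le_pos; [apply Rmult_le_pos; [apply Rmult_le_pos|]|]; unfold C; lra. }
  assert (HL : 1 <= L) by (unfold L; lra).
  assert (HdL : INR d * B * (M+2) <= L) by (unfold L; lra).
  assert (HdL2 : INR d * (delta + 2) * B * (2*M+3) <= delta * L).
  { fold C. unfold L. replace (delta * (1 + INR d * B * (M + 2) + INR d * (delta + 2) * B * C / delta))
      with (delta * (1 + INR d * B * (M + 2)) + INR d * (delta + 2) * B * C) by (field; lra).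
    assert (0 <= delta * (1 + INR d * B * (M + 2))) by (apply Rmult_le_pos; lra). lra. }
  pose proof (Dbound d M B L delta us u ltac:(lra) HB HL Hdel HdL HdL2 HU HvB
     (fun n j Hn Hj => proj1 (proj2 (HMb j Hj) n Hn)) Hu HuB (fun j Hj => proj1 (HMb j Hj))
     (fun n j Hn Hj => proj2 (proj2 (HMb j Hj) n Hn))) as HD.
  exists (eps / 2). split; [lra|].
  destruct (INR_unbounded L) as [N HN].
  exists (S N). intros n Hn.
  assert (HnL : L <= INR n) by (apply Rle_trans with (INR N); [lra|apply le_INR; lia]).
  pose proof (prod_in_U d us HU n) as PU.
  pose proof (prod_in_U d (fun _ => u) (fun _ _ => Hu) n) as QU.
  rewrite mpow_seq. unfold theta.
  destruct (Nat.leb_spec i j).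
  - destruct (Nat.eq_dec i j) as [<-|Hne].
    + rewrite (proj1 (PU i i Hi Hi)), (proj1 (QU i i Hi Hi)). rewrite Rminus_diag, Rabs_R0. lra.
    + set (g := (j - i)%nat).
      set (N' := INR n).
      assert (HN' : 0 < N') by (unfold N'; lra).
      rewrite <- Rmult_minus_distr_l, Rabs_mult, Rabs_pos_eq
        by (apply pow_le; apply Rlt_le, Rinv_0_lt_compat; lra).
      pose proof (HD n i j Hi Hj H) as HDn. fold g N' in HDn.
      assert (E : (/N')^g * (delta * (C^g * (N' + L)^g)) = delta * (C * (N'+L) * /N')^g)
        by (rewrite !Rpow_mult_distr; ring).
      assert (Hr : 0 <= C * (N'+L) * /N' <= 2*C).
      { split. apply Rmult_le_pos; [apply Rmult_le_pos|]; unfold C; try lra. apply Rlt_le, Rinv_0_lt_compat; lra.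
        apply (Rmult_le_reg_r N'); auto. rewrite Rmult_assoc, Rinv_l by lra. assert (0 <= C * (N' - L)) by (apply Rmult_le_pos; unfold C, N'; lra). lra. }
      assert ((C * (N'+L) * /N')^g <= (2*C)^g) by (apply pow_incr; lra).
      assert ((2*C)^g <= (2*C)^d) by (apply Rle_pow; auto; unfold g; lia).
      assert (0 <= (/N')^g) by (apply pow_le; apply Rlt_le, Rinv_0_lt_compat; lra).
      apply Rle_trans with ((/N')^g * (delta * (C^g * (N' + L)^g))).
      { apply Rmult_le_compat_l; auto. }
      rewrite E.
      apply Rle_trans with (delta * (2*C)^d).
      { apply Rmult_le_compat_l; lra. }
      right. unfold delta. field. lra.
  - rewrite (proj2 (PU i j Hi Hj)), (proj2 (QU i j Hi Hj)) by lia. rewrite Rminus_diag, Rabs_R0. lra.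
Qed.
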